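(* Let $p$ be a prime, $n\ge 1$, and let $M_n,M_n'\in\mathrm{Sym}_n(\mathbb{Z}_p)$ be nonsingular. Then $(\mathrm{Cok}(M_n),\langle\cdot,\cdot\rangle)\simeq(\mathrm{Cok}(M_n'),\langle\cdot,\cdot\rangle)$ if and only if there exists a nonsingular $M_n''\in\mathrm{Sym}_n(\mathbb{Z}_p)$ such that $M_n''$ is congruent to $M_n'$ and $M_n^{-1}-(M_n'')^{-1}\in\mathrm{Sym}_n(\mathbb{Z}_p)$.
   Context: $\mathbb{Z}_p$ denotes the $p$-adic integers and $\mathrm{Sym}_n(R)$ the $n\times n$ symmetric matrices over $R$. Two matrices $A,B\in\mathrm{Sym}_n(\mathbb{Z}_p)$ are congruent if $B=UAU^T$ for some $U\in\mathrm{GL}_n(\mathbb{Z}_p)$. For nonsingular $M\in\mathrm{Sym}_n(\mathbb{Z}_p)$, $\mathrm{Cok}(M):=\mathbb{Z}_p^n/M\mathbb{Z}_p^n$ is a finite abelian $p$-group equipped with the symmetric pairing $\langle x,y\rangle:=X^TM^{-1}Y \bmod \mathbb{Z}_p\in\mathbb{Q}_p/\mathbb{Z}_p$, where $X,Y\in\mathbb{Z}_p^n$ are lifts of $x,y$; this pairing is perfect. An isomorphism of two such groups with pairings is a group isomorphism preserving the pairings. *)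

(* Defs.v *)
From mathcomp Require Import all_boot all_order all_algebra.
From mathcomp Require Export fraction.
Set Implicit Arguments. Unset Strict Implicit. Unset Printing Implicit Defensive.
Import GRing.Theory.
Local Open Scope ring_scope.

(* R is (a model of) the ring of p-adic integers Z_p: a complete discrete
   valuation ring with uniformizer p and residue field F_p.  These axioms
   characterize Z_p up to unique isomorphism. *)
Record is_padic_integers (p : nat) (R : idomainType) : Prop := {
  padic_prime : prime p;
  padic_p_neq0 : (p%:R : R) != 0;
  padic_p_nonunit : (p%:R : R) \notin GRing.unit;
  padic_dvr : forall x : R, x != 0 ->
    exists k : nat, exists u : R, u \is a GRing.unit /\ x = p%:R ^+ k * u;
  padic_residue : forall x : R, exists a : int, exists y : R,
    x = a%:~R + p%:R * y;
  padic_complete : forall x : nat -> R,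
    (forall k : nat, exists y : R, x k.+1 - x k = p%:R ^+ k * y) ->
    exists l : R, forall k : nat, exists y : R, l - x k = p%:R ^+ k * y
}.

Section Defs.
Variable R : idomainType.
Local Notation K := {fraction R}.

(* the image of R = Z_p inside its fraction field K = Q_p *)
Definition inZ (x : K) : Prop := exists r : R, x = @FracField.tofrac R r.

Definition sym_mx {n : nat} (M : 'M[R]_n) : Prop := M^T = M.
Definition nonsingular {n : nat} (M : 'M[R]_n) : Prop := \det M != 0.

Definition congruent {n : nat} (A B : 'M[R]_n) : Prop :=
  exists U : 'M[R]_n, U \in unitmx /\ B = U *m A *m U^T.

Definition invK {n : nat} (M : 'M[R]_n) : 'M[K]_n := invmx (map_mx (fun r : R => @FracField.tofrac R r) M).

Definition in_SymZ {n : nat} (D : 'M[K]_n) : Prop :=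
  exists S : 'M[R]_n, sym_mx S /\ D = map_mx (fun r : R => @FracField.tofrac R r) S.

(* X = Y in Cok(M) = Z_p^n / M Z_p^n *)
Definition cok_eq {n : nat} (M : 'M[R]_n) (X Y : 'cV[R]_n) : Prop :=
  exists Z : 'cV[R]_n, X - Y = M *m Z.

(* the pairing <x,y> = X^T M^{-1} Y, as an element of Q_p (to be read mod Z_p) *)
Definition cok_pair {n : nat} (M : 'M[R]_n) (X Y : 'cV[R]_n) : K :=
  ((map_mx (fun r : R => @FracField.tofrac R r) X)^T *m invK M *m map_mx (fun r : R => @FracField.tofrac R r) Y) 0 0.

(* An isomorphism (Cok M, <,>) ~ (Cok M', <,>), given through a function phi
   on lifts Z_p^n -> Z_p^n: it induces a well-defined injective map
   Cok M -> Cok M', which is surjective, additive, and preserves the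
   Q_p/Z_p-valued pairings. *)
Definition cok_pair_iso {n : nat} (M M' : 'M[R]_n) : Prop :=
  exists phi : 'cV[R]_n -> 'cV[R]_n,
    [/\ (forall X Y, cok_eq M X Y <-> cok_eq M' (phi X) (phi Y)),
        (forall Y', exists X, cok_eq M' (phi X) Y'),
        (forall X Y, cok_eq M' (phi (X + Y)) (phi X + phi Y)) &
        (forall X Y, inZ (cok_pair M' (phi X) (phi Y) - cok_pair M X Y))].
End Defs.

(* Main.v *)
Require Import Defs.
From mathcomp Require Import all_boot all_order all_algebra.
From HB Require Import structures.
From Stdlib Require Import ClassicalEpsilon.
From mathcomp Require Import ring.
Set Implicit Arguments. Unset Strict Implicit. Unset Printing Implicit Defensive.
Import GRing.Theory.
Local Open Scope ring_scope.

Section FieldLemma.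
Variable F : fieldType.

Lemma stable_range_aux n (b : 'M[F]_n) k : forall a : 'M[F]_n,
  (\rank (kermx a) <= k)%N -> (exists d e, d *m a + e *m b = 1%:M) ->
  exists c, a + c *m b \in unitmx.
Proof.
elim: k => [|k IH] a hk [d [e hde]].
  exists 0; rewrite mul0mx addr0 -row_free_unit -kermx_eq0 -mxrank_eq0.
  by rewrite -leqn0.
have [au|anu] := boolP (a \in unitmx); first by exists 0; rewrite mul0mx addr0.
have kn0 : kermx a != 0 by rewrite kermx_eq0 row_free_unit.
have nba : ~~ (b <= a)%MS.
  apply: contra anu => hba; rewrite -row_full_unit -sub1mx -hde.
  by rewrite addmx_sub // ?submxMl // mulmx_sub.
have /existsP [i hi] : [exists i, ~~ (row i b <= a)%MS].
  apply: contraR nba => /existsPn H; apply/row_subP => i.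
  by have := H i; rewrite negbK.
set v := nz_row (kermx a).
have vn0 : v != 0 by rewrite nz_row_eq0.
have va : v *m a = 0 by apply/eqP; rewrite -sub_kermx nz_row_sub.
have /existsP [j hj] : [exists j, v 0 j != 0].
  apply: contraR vn0 => /existsPn H; apply/eqP/matrixP => r s.
  by rewrite (ord1 r) mxE; have := H s; rewrite negbK => /eqP.
set y : 'cV[F]_n := delta_mx j 0.
set u : 'rV[F]_n := delta_mx 0 i.
set w := u *m b.
have wE : w = row i b by rewrite rowE.
have wna : ~~ (w <= a)%MS by rewrite wE.
set a' := a + y *m w.
have xyE : forall x : 'rV[F]_n, x *m a' = x *m a + (x *m y) 0 0 *: w.
  move=> x; rewrite /a' mulmxDr mulmxA; congr (_ + _).
  by rewrite {1}[x *m y]mx11_scalar mul_scalar_mx.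
have vy : (v *m y) 0 0 = v 0 j.
  by rewrite /y -colE mxE.
have hlt : (kermx a' < kermx a)%MS.
  rewrite ltmxE; apply/andP; split.
    apply/row_subP => r; rewrite sub_kermx.
    set x := row r (kermx a').
    have : x *m a' = 0 by apply/eqP; rewrite -sub_kermx row_sub.
    rewrite xyE; have [s0|sn0] := eqVneq ((x *m y) 0 0) 0.
      by rewrite s0 scale0r addr0 => ->.
    move=> h; exfalso; move/negP: wna; apply.
    have -> : w = ((x *m y) 0 0)^-1 *: ((- x) *m a).
      have h' : (x *m y) 0 0 *: w = - (x *m a).
        by apply/eqP; rewrite -addr_eq0 addrC h.
      by rewrite mulNmx -h' scalerA mulVf // scale1r.
    by rewrite scalemx_sub // submxMl.
  apply/negP => hs.
  have : (v <= kermx a')%MS by apply: submx_trans hs; rewrite nz_row_sub.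
  rewrite sub_kermx xyE va add0r vy scaler_eq0 (negbTE hj) /=.
  apply/negP; apply: contra wna => /eqP ->; exact: sub0mx.
have hk' : (\rank (kermx a') <= k)%N.
  by rewrite -ltnS; apply: leq_trans (rank_ltmx hlt) hk.
have [c' hc'] : exists c', a' + c' *m b \in unitmx.
  apply: IH hk' _; exists d, (e - d *m y *m u).
  rewrite /a' mulmxDr mulmxBl addrA -addrA [_ *m b - _]addrC addrA.
  by rewrite /w !mulmxA addrK.
exists (y *m u + c'); rewrite mulmxDl addrA -mulmxA; exact: hc'.
Qed.

Lemma stable_range n (a b : 'M[F]_n) : (exists d e, d *m a + e *m b = 1%:M) ->
  exists c, a + c *m b \in unitmx.
Proof. exact: (@stable_range_aux n b n a (rank_leq_row _)). Qed.
End FieldLemma.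
Section Red.
Variables (p : nat) (R : idomainType) (HR : is_padic_integers p R).

Lemma pprime : prime p. Proof. exact: padic_prime HR. Qed.

Lemma p_dvd_of (c : int) (y : R) : c%:~R = p%:R * y -> (p%:Z %| c)%Z.
Proof.
move=> hc; apply/negPn/negP => hnd.
have cop : gcdz p%:Z c = 1.
  rewrite /gcdz /=; apply/eqP; rewrite eqz_nat; apply/eqP.
  by apply/eqP; rewrite -/(coprime _ _) prime_coprime ?pprime // -dvdzE.
have [u [v huv]] := Bezoutz p%:Z c.
rewrite cop in huv.
have : (1 : R) = p%:R * (u%:~R + v%:~R * y).
  have e : ((u * p%:Z + v * c)%:~R : R) = 1 by rewrite huv.
  rewrite -[LHS]e intrD !intrM hc /=; ring.
move=> h1; move/negP: (padic_p_nonunit HR); apply; apply/unitrP.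
by exists (u%:~R + v%:~R * y); rewrite -h1 mulrC -h1.
Qed.

Definition res (x : R) : int :=
  proj1_sig (constructive_indefinite_description _ (padic_residue HR x)).

Lemma res_spec x : exists y, x = (res x)%:~R + p%:R * y.
Proof. rewrite /res; case: constructive_indefinite_description => a /= h //. Qed.

Definition red (x : R) : 'F_p := (res x)%:~R.

Lemma Fp_int_eq (a b : int) : (p%:Z %| a - b)%Z -> (a%:~R : 'F_p) = b%:~R.
Proof.
move=> h; apply/eqP; rewrite -subr_eq0 -intrB -(divzK h) intrM.
have -> : ((p%:Z)%:~R : 'F_p) = p%:R by [].
by rewrite (pchar_Fp_0 pprime) mulr0.
Qed.

Lemma red_eq x (a : int) y : x = a%:~R + p%:R * y -> red x = a%:~R.
Proof.
move=> hx; have [y' hy'] := res_spec x; apply: Fp_int_eq.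
apply: (@p_dvd_of _ (y - y')); rewrite intrB.
have e : (res x)%:~R = (a%:~R : R) + p%:R * y - p%:R * y' by rewrite -hx {2}hy' addrK.
by rewrite e; ring.
Qed.

Lemma redB : {morph red : x y / x - y}.
Proof.
move=> x y; have [s hs] := res_spec x; have [t ht] := res_spec y.
rewrite (@red_eq (x - y) (res x - res y) (s - t)); first by rewrite intrB.
by rewrite intrB {1}hs {1}ht; ring.
Qed.

Lemma redM : {morph red : x y / x * y}.
Proof.
move=> x y; have [s hs] := res_spec x; have [t ht] := res_spec y.
rewrite (@red_eq (x * y) (res x * res y) ((res x)%:~R * t + s * (res y)%:~R + p%:R * s * t)).
  by rewrite intrM.
by rewrite intrM {1}hs {1}ht; ring.
Qed.

Lemma red1 : red 1 = 1.
Proof. by rewrite (@red_eq 1 1 0) // mulr0 addr0. Qed.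

Lemma red_unit x : red x != 0 -> x \is a GRing.unit.
Proof.
move=> hx; have xn0 : x != 0.
  by apply: contra hx => /eqP ->; rewrite (@red_eq 0 0 0) // mulr0 addr0.
have [k [u [hu hxe]]] := padic_dvr HR xn0; rewrite hxe in hx *; clear hxe xn0.
move: hx; case: k => [|k] hx; first by rewrite expr0 mul1r.
move: hx; rewrite (@red_eq _ 0 (p%:R ^+ k * u)) ?eqxx //.
by rewrite add0r exprS mulrA.
Qed.

Lemma red_lift (c : 'F_p) : red ((c : nat)%:R) = c.
Proof.
rewrite (@red_eq _ (c : nat)%:Z 0); last by rewrite mulr0 addr0.
by change ((nat_of_ord c)%:R = c); rewrite natr_Zp.
Qed.

Lemma residue_pow k (x : R) : exists a : int, exists y, x = a%:~R + p%:R ^+ k * y.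
Proof.
elim: k x => [|k IH] x; first by exists 0%Z, x; rewrite expr0 mul1r mulr0z add0r.
have [a [y hy]] := IH x; have [b [z hz]] := padic_residue HR y.
exists (a + (p ^ k)%:Z * b), z.
rewrite hy hz intrD intrM -[((p ^ k)%:Z)%:~R]/((p ^ k)%:R) natrX exprS; ring.
Qed.
End Red.

HB.instance Definition _ (p : nat) (R : idomainType) (HR : is_padic_integers p R) :=
  GRing.isZmodMorphism.Build R 'F_p (red HR) (redB HR).
HB.instance Definition _ (p : nat) (R : idomainType) (HR : is_padic_integers p R) :=
  GRing.isMonoidMorphism.Build R 'F_p (red HR) (red1 HR, redM HR).

Lemma red_det (p : nat) (R : idomainType) (HR : is_padic_integers p R) n (A : 'M[R]_n) :
  \det (map_mx (red HR) A) = red HR (\det A).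
Proof. exact: det_map_mx. Qed.

Section Basic.
Variable R : idomainType.
Local Notation tf := (@FracField.tofrac R).
Local Notation mf A := (map_mx tf A).

Lemma mf_inj m k (A B : 'M[R]_(m, k)) : mf A = mf B -> A = B.
Proof.
move=> /matrixP h; apply/matrixP => i j; have := h i j; rewrite !mxE.
by move/eqP; rewrite tofrac_eq => /eqP.
Qed.

Lemma unitf n (M : 'M[R]_n) : nonsingular M -> mf M \in unitmx.
Proof. by move=> h; rewrite unitmxE det_map_mx unitfE tofrac_eq0. Qed.

Lemma invmx_uniq (F : fieldType) n (P Q : 'M[F]_n) :
  Q \in unitmx -> P *m Q = 1%:M -> P = invmx Q.
Proof. by move=> hQ h; rewrite -[P]mulmx1 -(mulmxV hQ) mulmxA h mul1mx. Qed.

Variable n : nat.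
Implicit Types (M : 'M[R]_n) (X Y Z : 'cV[R]_n).

Lemma ce_refl M X : cok_eq M X X.
Proof. by exists 0; rewrite subrr mulmx0. Qed.

Lemma ce_sym M X Y : cok_eq M X Y -> cok_eq M Y X.
Proof. by case=> Z h; exists (- Z); rewrite mulmxN -h opprB. Qed.

Lemma ce_trans M X Y W : cok_eq M X Y -> cok_eq M Y W -> cok_eq M X W.
Proof.
case=> Z h [Z' h']; exists (Z + Z'); rewrite mulmxDr -h -h'.
by rewrite addrA subrK.
Qed.

Lemma ce_add M X Y X' Y' : cok_eq M X X' -> cok_eq M Y Y' -> cok_eq M (X + Y) (X' + Y').
Proof.
case=> Z h [Z' h']; exists (Z + Z'); rewrite mulmxDr -h -h'.
by rewrite opprD addrACA.
Qed.

Lemma ce_opp M X Y : cok_eq M X Y -> cok_eq M (- X) (- Y).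
Proof. by case=> Z h; exists (- Z); rewrite mulmxN -h opprB opprK addrC. Qed.

Lemma ce_scale M (r : R) X Y : cok_eq M X Y -> cok_eq M (r *: X) (r *: Y).
Proof. by case=> Z h; exists (r *: Z); rewrite -scalerBr h scalemxAr. Qed.

Lemma ce_mul M X Z : cok_eq M (X + M *m Z) X.
Proof. by exists Z; rewrite addrC addKr. Qed.

Lemma ce_det M X : cok_eq M ((\det M) *: X) 0.
Proof.
exists (\adj M *m X); rewrite subr0 mulmxA mul_mx_adj.
by rewrite mul_scalar_mx.
Qed.

Lemma ce_sum M (I : Type) (s : seq I) (f g : I -> 'cV[R]_n) :
  (forall i, cok_eq M (f i) (g i)) ->
  cok_eq M (\sum_(i <- s) f i) (\sum_(i <- s) g i).
Proof.
move=> h; elim: s => [|a s IH]; first by rewrite !big_nil; exact: ce_refl.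
by rewrite !big_cons; apply: ce_add.
Qed.

Lemma ce_int M X Y : nonsingular M ->
  (cok_eq M X Y <-> exists Z, invmx (mf M) *m mf (X - Y) = mf Z).
Proof.
move=> hM; have hu := unitf hM; split.
  by case=> Z ->; exists Z; rewrite map_mxM mulKmx.
case=> Z h; exists Z; apply: mf_inj.
by rewrite map_mxM -h mulKVmx.
Qed.

Lemma inZ_tf (r : R) : inZ (tf r). Proof. by exists r. Qed.
Lemma inZD (x y : {fraction R}) : inZ x -> inZ y -> inZ (x + y).
Proof. by case=> a -> [b ->]; exists (a + b); rewrite rmorphD. Qed.
Lemma inZN (x : {fraction R}) : inZ x -> inZ (- x).
Proof. by case=> a ->; exists (- a); rewrite rmorphN. Qed.
Lemma inZB (x y : {fraction R}) : inZ x -> inZ y -> inZ (x - y).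
Proof. by move=> hx hy; apply: inZD => //; apply: inZN. Qed.

Lemma cokpE M X Y : cok_pair M X Y = ((mf X)^T *m invmx (mf M) *m mf Y) 0 0.
Proof. by []. Qed.
Lemma invKE M : invK M = invmx (mf M).
Proof. by []. Qed.

Lemma pairDl M X Y Z : sym_mx M -> nonsingular M ->
  cok_pair M (X + M *m Z) Y = cok_pair M X Y + tf ((Z^T *m Y) 0 0).
Proof.
move=> hs hM; rewrite !cokpE map_mxD map_mxM.
rewrite linearD /= trmx_mul [(mf M)^T]map_trmx hs !mulmxDl mxE.
congr (_ + _); rewrite -(mulmxA (mf Z)^T) (mulmxV (unitf hM)) mulmx1.
by rewrite map_trmx -map_mxM mxE.
Qed.

Lemma pairDr M X Y W : nonsingular M ->
  cok_pair M X (Y + M *m W) = cok_pair M X Y + tf ((X^T *m W) 0 0).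
Proof.
move=> hM; rewrite !cokpE map_mxD map_mxM.
rewrite mulmxDr mxE; congr (_ + _).
rewrite mulmxA -(mulmxA _ _ (mf M)) (mulVmx (unitf hM)) mulmx1.
by rewrite map_trmx -map_mxM mxE.
Qed.

Lemma pair_ce M X Y X' Y' : sym_mx M -> nonsingular M ->
  cok_eq M X X' -> cok_eq M Y Y' ->
  inZ (cok_pair M X Y - cok_pair M X' Y').
Proof.
move=> hs hM [Z hZ] [W hW].
have -> : X = X' + M *m Z by rewrite -hZ addrC subrK.
have -> : Y = Y' + M *m W by rewrite -hW addrC subrK.
have e : forall a b c : {fraction R}, c + b + a - c = b + a by move=> a b c; ring.
rewrite pairDl // pairDr // e.
apply: inZD; exact: inZ_tf.
Qed.
Lemma pair_diff (A B : 'M[R]_n) X Y :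
  cok_pair A X Y - cok_pair B X Y = ((mf X)^T *m (invmx (mf A) - invmx (mf B)) *m mf Y) 0 0.
Proof. by rewrite !cokpE mulmxBr mulmxBl [RHS]mxE [X in _ = _ + X]mxE. Qed.

Lemma inZ_mat (S : 'M[R]_n) X Y : inZ (((mf X)^T *m mf S *m mf Y) 0 0).
Proof. rewrite map_trmx -!map_mxM mxE; exact: inZ_tf. Qed.
End Basic.

Lemma oppeq (V : zmodType) (a b c : V) : a - b = c -> b - a = - c.
Proof. by move=> <-; rewrite opprB. Qed.
Lemma subeq_l (V : zmodType) (a b c : V) : a - b = c -> b = a - c.
Proof. by move=> <-; rewrite opprB addrC subrK. Qed.
Lemma subeq_r (V : zmodType) (a b c : V) : a - b = c -> a = b + c.
Proof. by move=> <-; rewrite addrC subrK. Qed.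

Section Backward.
Variable R : idomainType.
Local Notation tf := (@FracField.tofrac R).
Local Notation mf A := (map_mx tf A).

Lemma backward n (M M' M'' : 'M[R]_n) : sym_mx M -> sym_mx M' ->
  nonsingular M -> nonsingular M' -> sym_mx M'' -> nonsingular M'' ->
  congruent M'' M' -> in_SymZ (invK M - invK M'') -> cok_pair_iso M M'.
Proof.
move=> hM hM' nsM nsM' hM'' nsM'' [U [hU hMe]] [S [hS hD]].
have hD' : invmx (mf M) - invmx (mf M'') = mf S := hD.
have hUt : U^T \in unitmx by rewrite unitmx_tr.
have hP : (mf U)^T *m invmx (mf M') *m mf U = invmx (mf M'').
  apply: invmx_uniq; first exact: unitf.
  have e1 : mf U *m mf M'' = mf M' *m mf (invmx U^T).
    by rewrite -!map_mxM hMe mulmxK.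
  rewrite -!mulmxA e1 !mulmxA -(mulmxA _ _ (mf M')) (mulVmx (unitf nsM')) mulmx1.
  by rewrite map_trmx -map_mxM (mulmxV hUt) map_mx1.
have hD2 := subeq_l hD'.
have hD3 := subeq_r hD'.
exists (fun X => U *m X); split.
- move=> X Y; apply: (@iff_trans _ (cok_eq M'' X Y)).
    rewrite (ce_int _ _ nsM) (ce_int _ _ nsM''); split; case=> Z hZ.
      by exists (Z - S *m (X - Y)); rewrite hD2 mulmxBl hZ -map_mxM -map_mxB.
    by exists (Z + S *m (X - Y)); rewrite hD3 mulmxDl hZ -map_mxM -map_mxD.
  split; case=> Z hZ.
    exists (invmx U^T *m Z); rewrite -mulmxBr hZ hMe -!mulmxA.
    by rewrite (mulKVmx hUt).
  exists (U^T *m Z); rewrite -[X - Y](mulKmx hU) mulmxBr hZ hMe.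
  by rewrite -!mulmxA (mulKmx hU).
- by move=> Y'; exists (invmx U *m Y'); rewrite (mulKVmx hU); apply: ce_refl.
- by move=> X Y; rewrite mulmxDr; apply: ce_refl.
- move=> X Y.
  have -> : cok_pair M' (U *m X) (U *m Y) = cok_pair M'' X Y.
    rewrite !cokpE !map_mxM trmx_mul -hP.
    by rewrite !mulmxA.
  rewrite pair_diff (oppeq hD') mulmxN mulNmx mxE.
  apply: inZN; exact: inZ_mat.
Qed.
End Backward.

Lemma subsub (V : zmodType) (a b : V) : a - (a - b) = b.
Proof. by rewrite opprB addrC subrK. Qed.
Lemma trB (F : pzRingType) m k (U V : 'M[F]_(m, k)) : (U - V)^T = U^T - V^T.
Proof. by apply/matrixP => i j; rewrite !mxE. Qed.
Lemma trD (F : pzRingType) m k (U V : 'M[F]_(m, k)) : (U + V)^T = U^T + V^T.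
Proof. by apply/matrixP => i j; rewrite !mxE. Qed.
Lemma unit_neq0 (F : idomainType) (x : F) : x \is a GRing.unit -> x != 0.
Proof. by move=> hu; apply/eqP => h0; move: hu; rewrite h0 unitr0. Qed.

Lemma sym_conj (F : comUnitRingType) m (B N : 'M[F]_m) : N^T = N ->
  (B^T *m N *m B)^T = B^T *m N *m B.
Proof. by move=> hN; rewrite !trmx_mul trmxK hN mulmxA. Qed.
Lemma inv_sym (F : comUnitRingType) m (A : 'M[F]_m) : A^T = A -> (invmx A)^T = invmx A.
Proof. by rewrite trmx_inv => ->. Qed.
Lemma mf_sym (R : idomainType) m (A : 'M[R]_m) : A^T = A ->
  (map_mx (@FracField.tofrac R) A)^T = map_mx (@FracField.tofrac R) A.
Proof. by rewrite map_trmx => ->. Qed.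

Lemma oppsub (V : zmodType) (a b c : V) : (a - c) - (a - b) = b - c.
Proof. by rewrite opprB addrC addrA subrK. Qed.

Section Forward.
Variables (p : nat) (R : idomainType) (HR : is_padic_integers p R).
Variables (n : nat) (M M' : 'M[R]_n).
Hypotheses (hM : sym_mx M) (hM' : sym_mx M') (nsM : nonsingular M) (nsM' : nonsingular M').
Variable phi : 'cV[R]_n -> 'cV[R]_n.
Hypothesis hwd : forall X Y, cok_eq M X Y <-> cok_eq M' (phi X) (phi Y).
Hypothesis hadd : forall X Y, cok_eq M' (phi (X + Y)) (phi X + phi Y).
Local Notation tf := (@FracField.tofrac R).
Local Notation mf A := (map_mx tf A).

Lemma phi0 : cok_eq M' (phi 0) 0.
Proof.
have h := hadd 0 0; rewrite addr0 in h.
have := ce_add h (ce_refl M' (- phi 0)).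
by rewrite subrr addrK => /ce_sym.
Qed.

Lemma phiN X : cok_eq M' (phi (- X)) (- phi X).
Proof.
have h := hadd X (- X); rewrite subrr in h.
have h2 := ce_trans (ce_sym h) phi0.
have := ce_add (ce_refl M' (- phi X)) h2.
by rewrite addKr addr0.
Qed.

Lemma phi_nat m X : cok_eq M' (phi (m%:R *: X)) (m%:R *: phi X).
Proof.
elim: m => [|m IH]; first by rewrite !scale0r; exact: phi0.
rewrite mulrS !scalerDl !scale1r.
exact: ce_trans (hadd _ _) (ce_add (ce_refl _ _) IH).
Qed.

Lemma phi_int (c : int) X : cok_eq M' (phi (c%:~R *: X)) (c%:~R *: phi X).
Proof.
case: c => m; first exact: phi_nat.
have -> : (Negz m)%:~R = - ((m.+1)%:R : R) by rewrite NegzE mulrNz.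
rewrite !scaleNr; apply: ce_trans (phiN _) _; apply: ce_opp; exact: phi_nat.
Qed.

Lemma ce_detM (A : 'M[R]_n) (r : R) X : cok_eq A ((\det A * r) *: X) 0.
Proof. by rewrite -scalerA; apply: ce_det. Qed.

Lemma phi_scale (x : R) X : cok_eq M' (phi (x *: X)) (x *: phi X).
Proof.
have qn0 : \det M * \det M' != 0 by rewrite mulf_neq0.
have [k [w [hw hq]]] := padic_dvr HR qn0.
have [a [y hy]] := residue_pow HR k x.
set t := w^-1 * y.
have hx : x = a%:~R + \det M * (\det M' * t).
  rewrite hy /t mulrA hq; congr (_ + _).
  by rewrite mulrA (mulrK hw).
have hx' : x = a%:~R + \det M' * (\det M * t).
  by rewrite hx mulrCA.
have h1 : cok_eq M (x *: X) (a%:~R *: X).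
  have := ce_add (ce_refl M (a%:~R *: X)) (ce_detM M (\det M' * t) X).
  by rewrite addr0 -scalerDl -hx.
apply: ce_trans ((proj1 (hwd _ _)) h1) _.
apply: ce_trans (phi_int _ _) _.
have := ce_add (ce_refl M' (a%:~R *: phi X)) (ce_detM M' (\det M * t) (phi X)).
by rewrite addr0 -scalerDl -hx' => /ce_sym.
Qed.

Lemma phi_sum (s : seq 'I_n) (f : 'I_n -> 'cV[R]_n) :
  cok_eq M' (phi (\sum_(j <- s) f j)) (\sum_(j <- s) phi (f j)).
Proof.
elim: s => [|a s IH]; first by rewrite !big_nil; exact: phi0.
rewrite !big_cons; exact: ce_trans (hadd _ _) (ce_add (ce_refl _ _) IH).
Qed.

Definition Aphi : 'M[R]_n := \matrix_(i, j) (phi (delta_mx j 0)) i 0.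

Lemma phi_lin X : cok_eq M' (phi X) (Aphi *m X).
Proof.
have hX : X = \sum_(j < n) X j 0 *: (delta_mx j 0 : 'cV[R]_n).
  apply/matrixP => i k; rewrite (ord1 k) summxE (bigD1 i) //= big1.
    by rewrite !mxE !eqxx mulr1 addr0.
  by move=> j hj; rewrite !mxE eq_sym (negbTE hj) mulr0.
have hA : Aphi *m X = \sum_(j < n) X j 0 *: phi (delta_mx j 0).
  apply/matrixP => i k; rewrite (ord1 k) summxE !mxE; apply: eq_bigr => j _.
  by rewrite !mxE mulrC.
rewrite {1}hX hA; apply: ce_trans (phi_sum _ _) _.
apply: ce_sum => j; exact: phi_scale.
Qed.

Lemma entry_delta (D : 'M[{fraction R}]_n) i j :
  ((mf (delta_mx i 0 : 'cV[R]_n))^T *m D *m mf (delta_mx j 0 : 'cV[R]_n)) 0 0 = D i j.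
Proof. by rewrite !map_delta_mx trmx_delta -rowE -colE !mxE. Qed.

Hypothesis hpair : forall X Y, inZ (cok_pair M' (phi X) (phi Y) - cok_pair M X Y).

Lemma pair_B (B : 'M[R]_n) : (forall X, cok_eq M' (phi X) (B *m X)) ->
  forall i j, inZ (((mf B)^T *m invmx (mf M') *m mf B - invmx (mf M)) i j).
Proof.
move=> hB i j; set X : 'cV[R]_n := delta_mx i 0; set Y : 'cV[R]_n := delta_mx j 0.
have h1 := pair_ce hM' nsM' (hB X) (hB Y).
have h3 := inZB (hpair X Y) h1; rewrite oppsub in h3.
have e : cok_pair M' (B *m X) (B *m Y) =
    ((mf X)^T *m ((mf B)^T *m invmx (mf M') *m mf B) *m mf Y) 0 0.
  by rewrite cokpE !map_mxM trmx_mul !mulmxA.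
rewrite e cokpE in h3.
rewrite -entry_delta -/X -/Y mulmxBr mulmxBl [X in inZ X]mxE [X in inZ (_ + X)]mxE.
exact: h3.
Qed.

Lemma lift_mod (B C : 'M[R]_n) : (forall X, cok_eq M' (phi X) (B *m X)) ->
  forall X, cok_eq M' (phi X) ((B + M' *m C) *m X).
Proof.
move=> hB X; rewrite mulmxDl -mulmxA.
exact: ce_trans (hB X) (ce_sym (ce_mul _ _ _)).
Qed.

Hypothesis hsurj : forall Y', exists X, cok_eq M' (phi X) Y'.

Lemma exists_DE : exists D1 E1 : 'M[R]_n, Aphi *m D1 - M' *m E1 = 1%:M.
Proof.
have h : forall j : 'I_n, exists X : 'cV[R]_n, exists Z : 'cV[R]_n, Aphi *m X - M' *m Z = delta_mx j 0.
  move=> j; have [X hX] := hsurj (delta_mx j (0 : 'I_1)).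
  have [Z hZ] := ce_trans (ce_sym (phi_lin X)) hX.
  by exists X, Z; rewrite -hZ subsub.
have [fX hfX] := fin_all_exists h.
have [fZ hfZ] := fin_all_exists hfX.
exists (\matrix_(i < n, j < n) fX j i 0), (\matrix_(i < n, j < n) fZ j i 0).
apply/matrixP => i j.
have e1 : (Aphi *m (\matrix_(i < n, j < n) fX j i 0) - M' *m (\matrix_(i < n, j < n) fZ j i 0)) i j
    = (Aphi *m fX j - M' *m fZ j) i 0.
  rewrite !mxE; congr (_ - _); apply: eq_bigr => k _; rewrite !mxE //.
rewrite e1 hfZ !mxE eqxx andbT //.
Qed.

Lemma exists_unit_lift : exists C : 'M[R]_n, Aphi + M' *m C \in unitmx.
Proof.
have [D1 [E1 h1]] := exists_DE.
have hst : exists d e, d *m (map_mx (red HR) Aphi)^T + e *m (map_mx (red HR) M')^T = 1%:M.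
  exists (map_mx (red HR) D1)^T, (- (map_mx (red HR) E1)^T).
  rewrite mulNmx -!trmx_mul -!map_mxM -trB -map_mxB h1 map_mx1 trmx1 //.
have [c hc] := stable_range hst.
exists (\matrix_(i < n, j < n) (((c^T i j : 'F_p) : nat)%:R : R)).
rewrite unitmxE; apply: (@red_unit p R HR).
rewrite -red_det map_mxD map_mxM.
have -> : map_mx (red HR) (\matrix_(i < n, j < n) (((c^T i j : 'F_p) : nat)%:R : R)) = c^T.
  by apply/matrixP => i j; rewrite !mxE red_lift.
rewrite -det_tr trD trmx_mul trmxK.
by rewrite unitmxE unitfE in hc.
Qed.

Lemma forward_core : exists M'' : 'M[R]_n,
    [/\ sym_mx M'', nonsingular M'', congruent M'' M' &
        in_SymZ (invK M - invK M'')].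
Proof.
have [C hC] := exists_unit_lift.
set A2 := Aphi + M' *m C.
have hA2 : forall X, cok_eq M' (phi X) (A2 *m X) := lift_mod C phi_lin.
have hD := pair_B hA2.
set M'' := invmx A2 *m M' *m (invmx A2)^T.
have nsM'' : nonsingular M''.
  rewrite /nonsingular /M'' !det_mulmx det_tr det_inv.
  have hd : \det A2 != 0 by apply: unit_neq0; rewrite -unitmxE.
  by rewrite !mulf_neq0 // invr_eq0.
have e1 : mf A2 *m mf M'' = mf M' *m mf (invmx A2)^T.
  by rewrite -!map_mxM /M'' !mulmxA (mulmxV hC) mul1mx.
have hinv : (mf A2)^T *m invmx (mf M') *m mf A2 = invmx (mf M'').
  apply: invmx_uniq; first exact: unitf.
  rewrite -!mulmxA e1 !mulmxA -(mulmxA _ _ (mf M')) (mulVmx (unitf nsM')) mulmx1.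
  by rewrite map_trmx -map_mxM -trmx_mul (mulVmx hC) trmx1 map_mx1.
exists M''; split => //.
- rewrite /sym_mx /M'' !trmx_mul trmxK hM' mulmxA //.
- exists A2; split => //.
  rewrite /M'' !mulmxA (mulmxV hC) mul1mx -mulmxA -trmx_mul (mulmxV hC) trmx1 mulmx1 //.
set D2 := (mf A2)^T *m invmx (mf M') *m mf A2 - invmx (mf M).
have hs : forall ij : 'I_n * 'I_n, exists r, D2 ij.1 ij.2 = tf r.
  by move=> [i j]; have [r hr] := hD i j; exists r.
have [s hs'] := fin_all_exists hs.
have hs2 : forall i j, D2 i j = tf (s (i, j)) := fun i j => hs' (i, j).
have hDs : D2^T = D2.
  rewrite /D2 trB (sym_conj (mf A2) (inv_sym (mf_sym hM'))) (inv_sym (mf_sym hM)).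
  reflexivity.
have hDij : forall i j, D2 j i = D2 i j.
  by move=> i j; have := congr1 (fun A : 'M[{fraction R}]_n => A i j) hDs; rewrite /= mxE.
exists (\matrix_(i < n, j < n) - s (i, j)); split.
  apply/matrixP => i j; rewrite !mxE; congr (- _); apply/eqP.
  by rewrite -tofrac_eq -!hs2 hDij.
change (invmx (mf M) - invmx (mf M'') = mf (\matrix_(i < n, j < n) - s (i, j))).
rewrite -hinv -/D2 -[invmx (mf M) - _]opprB.
apply/matrixP => i j; rewrite mxE [RHS]mxE [in RHS]mxE rmorphN -/D2 hs2.
reflexivity.
Qed.
End Forward.

Unset Implicit Arguments.

Theorem mainTheorem1 (p : nat) (R : idomainType) (HR : is_padic_integers p R)
  (n : nat) (hn : (1 <= n)%N) (M M' : 'M[R]_n)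
  (hM : sym_mx M) (hM' : sym_mx M')
  (nsM : nonsingular M) (nsM' : nonsingular M') :
  cok_pair_iso M M' <->
  exists M'' : 'M[R]_n,
    [/\ sym_mx M'', nonsingular M'', congruent M'' M' &
        in_SymZ (invK M - invK M'')].
Proof.
split.
- case=> phi [h1 h2 h3 h4].
  exact: (@forward_core p R HR n M M' hM hM' nsM nsM' phi h1 h3 h4 h2).
- case=> M'' [h1 h2 h3 h4].
  exact: (backward hM hM' nsM nsM' h1 h2 h3 h4).
Qed.
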